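(* Let $n\geq2$ and let $\mathcal R(P_n)=u_1,\ldots,u_r$. Let $k$ be the smallest index such that $x_{n-1}\nmid u_k$. Then $(u_1,\ldots,u_{k-1}):(u_k)=(x_{n-1})$. Moreover, if $i>k$, then $$(u_1,\ldots,u_{i-1}):(u_i)=(x_{n-1})+(u_k,\ldots,u_{i-1}):(u_i).$$
   Context: Let $K$ be a field. For $m\geq 1$, $P_m$ is the path graph on vertices $x_1,\ldots,x_m$ with edges $\{x_i,x_{i+1}\}$. The cover ideal $J(P_m)$ is generated by the monomials $\prod_{x\in C}x$ with $C$ a minimal vertex cover of $P_m$. The rooted list $\mathcal R(P_m)$ is defined recursively: $\mathcal R(P_1)$ empty; $\mathcal R(P_2)=x_1,x_2$; $\mathcal R(P_3)=x_2,x_1x_3$; $\mathcal R(P_4)=x_1x_3,x_2x_3,x_2x_4$; for $m\geq5$, if $\mathcal R(P_{m-2})=u_1,\ldots,u_r$ and $\mathcal R(P_{m-3})=v_1,\ldots,v_s$, then $\mathcal R(P_m)=x_{m-1}u_1,\ldots,x_{m-1}u_r,x_mx_{m-2}v_1,\ldots,x_mx_{m-2}v_s$; it lists each minimal monomial generator of $J(P_m)$ once. *)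

(* Defs.v *)
From HB Require Import structures.
From mathcomp Require Import all_boot all_algebra.
From mathcomp Require Import mpoly.
Set Implicit Arguments. Unset Strict Implicit. Unset Printing Implicit Defensive.
Import GRing.Theory.
Local Open Scope ring_scope.

(* The rooted list R(P_m), each monomial being encoded by the list of the
   (1-based) indices j of the variables x_j occurring in it (all squarefree).
   For m = p+5: R(P_m) = x_{m-1} R(P_{m-2}), x_m x_{m-2} R(P_{m-3}). *)
Fixpoint rooted (m : nat) : seq (seq nat) :=
  match m with
  | 0 => [::]
  | 1 => [::]
  | 2 => [:: [:: 1%N]; [:: 2%N]]
  | 3 => [:: [:: 2%N]; [:: 1%N; 3%N]]
  | 4 => [:: [:: 1%N; 3%N]; [:: 2%N; 3%N]; [:: 2%N; 4%N]]
  | S (S ((S ((S (S _)) as r)) as q)) as m' =>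
      map (cons m'.-1) (rooted q) ++ map (fun s => m' :: m'.-2 :: s) (rooted r)
  end.

(* The variable x_j (1 <= j <= n) of K[x_1,...,x_n] = {mpoly K[n]},
   x_j being 'X_(j-1); out-of-range indices are never used. *)
Definition var (K : fieldType) (n j : nat) : {mpoly K[n]} :=
  match @insub nat (fun i => i < n)%N _ j.-1 with
  | Some i => 'X_i
  | None => 0
  end.

Definition mono (K : fieldType) (n : nat) (s : seq nat) : {mpoly K[n]} :=
  \prod_(j <- s) var K n j.

Definition rootedR (K : fieldType) (n : nat) : seq {mpoly K[n]} :=
  map (mono K n) (rooted n).

Definition ideal_gen (R : comNzRingType) (gs : seq R) : R -> Prop :=
  fun f => exists c : 'I_(size gs) -> R, f = \sum_(i < size gs) c i * gs`_i.

Definition ideal_colon (R : comNzRingType) (I J : R -> Prop) : R -> Prop :=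
  fun f => forall g, J g -> I (f * g).

Definition ideal_sum (R : comNzRingType) (I J : R -> Prop) : R -> Prop :=
  fun f => exists a b, I a /\ J b /\ f = a + b.

Definition ideal_eq (R : comNzRingType) (I J : R -> Prop) : Prop :=
  forall f, I f <-> J f.

Definition rdvd (R : comNzRingType) (a b : R) : Prop := exists q, b = a * q.

(* Main.v *)
Require Import Defs.
From HB Require Import structures.
From mathcomp Require Import all_boot all_algebra.
From mathcomp Require Import mpoly zify.
Set Implicit Arguments. Unset Strict Implicit. Unset Printing Implicit Defensive.

Lemma rootedS p : rooted p.+3.+2 =
  map (cons p.+4) (rooted p.+3) ++ map (fun s => p.+3.+2 :: p.+3 :: s) (rooted p.+2).
Proof. by []. Qed.

Definition covers (m : nat) (S : pred nat) := forall i, 0 < i < m -> S i || S i.+1.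

Lemma coversB m (S : pred nat) : all (fun i => S i || S i.+1) (iota 1 m.-1) -> covers m S.
Proof. move=> /allP H i Hi; apply: H; rewrite mem_iota; lia. Qed.

Definition goodl (m : nat) (s : seq nat) :=
  [/\ uniq s, forall j, j \in s -> 0 < j <= m & covers m (mem s)].

Lemma goodB m s : uniq s -> all (fun j => 0 < j <= m) s ->
  all (fun i => (i \in s) || (i.+1 \in s)) (iota 1 m.-1) -> goodl m s.
Proof. by move=> U /allP A C; split=> //; apply: coversB. Qed.

Lemma sound m : forall s, s \in rooted m -> goodl m s.
Proof.
elim/ltn_ind: m => m IH.
case: m IH => [|[|[|[|[|p]]]]] IH s //=.
- by rewrite !inE => /orP[]/eqP-> ; apply: goodB.
- by rewrite !inE => /orP[]/eqP-> ; apply: goodB.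
- by rewrite !inE => /orP[/eqP->|/orP[]/eqP->] ; apply: goodB.
rewrite -/(rooted p.+3.+2) rootedS mem_cat => /orP[] /mapP [u Hu ->].
- have [U1 R1 C1] := IH p.+3 ltac:(lia) u Hu.
  split => /=.
  + rewrite U1 andbT; apply/negP => /R1; lia.
  + move=> j; rewrite inE => /orP[/eqP->|/R1]; lia.
  + move=> i Hi; rewrite /= !inE.
    have [Hi2|Hi2] := ltnP i p.+3.
    * by move: (C1 i ltac:(lia)); rewrite /= => /orP[] ->; rewrite !orbT.
    * have [->|->] : i = p.+3 \/ i = p.+4 by lia.
      all: try by rewrite ?eqxx /= ?orbT.
- have [U1 R1 C1] := IH p.+2 ltac:(lia) u Hu.
  split => /=.
  + rewrite /= U1 andbT inE negb_or; apply/andP; split; [apply/andP; split|]; apply/negP; try (move/R1; lia); lia.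
  + move=> j; rewrite !inE => /orP[/eqP->|/orP[/eqP->|/R1]]; lia.
  + move=> i Hi; rewrite /= !inE.
    have [Hi2|Hi2] := ltnP i p.+2.
    * by move: (C1 i ltac:(lia)); rewrite /= => /orP[] ->; rewrite !orbT.
    * have [->|[->|->]] : i = p.+2 \/ i = p.+3 \/ i = p.+4 by lia.
      all: try by rewrite ?eqxx /= ?orbT.
Qed.

Lemma complete m (S : pred nat) : 1 < m -> covers m S ->
  exists2 u, u \in rooted m & all S u.
Proof.
elim/ltn_ind: m S => m IH S.
case: m IH => [|[|[|[|[|p]]]]] IH //= _ C.
- have := C 1 erefl; case/orP => H; [exists [:: 1]|exists [:: 2]]; rewrite /= ?H //.
- have := C 1 erefl; have := C 2 erefl.
  case E2: (S 2) => /=; [move=> _ _|move=> H3 H1]; first by exists [:: 2]; rewrite /= ?E2.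
  by exists [:: 1; 3]; rewrite /= ?H1 ?H3.
- have := C 1 erefl; have := C 2 erefl; have := C 3 erefl.
  case E3: (S 3) => /=; [move=> _ _|move=> H4 H2 _]; last by exists [:: 2; 4]; rewrite /= ?H2 ?H4 ?inE.
  case/orP=> H; [exists [:: 1; 3]|exists [:: 2; 3]]; rewrite /= ?H ?E3 ?inE //.
rewrite -/(rooted p.+3.+2) rootedS.
case E: (S p.+4).
- have [u Hu Au] := IH p.+3 ltac:(lia) S ltac:(lia) (fun i Hi => C i ltac:(lia)).
  exists (p.+4 :: u); last by rewrite /= E.
  by rewrite mem_cat map_f.
- have H5 := C p.+4 ltac:(lia); rewrite E /= in H5.
  have H3 := C p.+3 ltac:(lia); rewrite E orbF in H3.
  have [u Hu Au] := IH p.+2 ltac:(lia) S ltac:(lia) (fun i Hi => C i ltac:(lia)).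
  exists (p.+3.+2 :: p.+3 :: u); last by rewrite /= H5 H3.
  by rewrite mem_cat (map_f (fun s => p.+3.+2 :: p.+3 :: s)) ?orbT.
Qed.

Definition k0 n := match n with 2 => 1 | 3 => 1 | 4 => 2 | _ => size (rooted n.-2) end.

Lemma structR n : 1 < n ->
 (forall j, j < k0 n -> n.-1 \in nth [::] (rooted n) j) /\
 (forall j, k0 n <= j < size (rooted n) -> n.-1 \notin nth [::] (rooted n) j) /\
 (forall j, k0 n <= j < size (rooted n) ->
    exists2 l, l < k0 n & {subset nth [::] (rooted n) l <= n.-1 :: nth [::] (rooted n) j}).
Proof.
case: n => [|[|[|[|[|p]]]]] // _.
- split; [|split]; case=> [|[|[|j]]] //= _; exists 0 => //; by apply/allP.
- split; [|split]; case=> [|[|[|j]]] //= _; exists 0 => //; by apply/allP.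
- split; [|split]; case=> [|[|[|[|j]]]] //= _; exists 1 => //; by apply/allP.
have -> : k0 p.+3.+2 = size (rooted p.+3) by [].
rewrite -/(rooted p.+3.+2) rootedS.
set A := rooted p.+3; set B := rooted p.+2.
have sA := size_map (cons p.+4) A.
have sB := size_map (fun s => p.+3.+2 :: p.+3 :: s) B.
split; [|split].
- move=> j Hj; rewrite nth_cat sA Hj (nth_map [::]) //.
  by rewrite inE eqxx.
- move=> j /andP[H1 H2]; rewrite nth_cat sA ltnNge H1 /= (nth_map [::]); last first.
    by rewrite size_cat sA sB in H2; lia.
  have HB : nth [::] B (j - size A) \in B.
    apply: mem_nth; rewrite size_cat sA sB in H2; suff: j - size A < size B by []; lia.
  have [_ R1 _] := sound HB.
  rewrite !inE negb_or; apply/andP; split; first lia.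
  rewrite negb_or; apply/andP; split; first lia.
  by apply/negP => /R1; lia.
- move=> j /andP[H1 H2]; rewrite nth_cat sA ltnNge H1 /= (nth_map [::]); last first.
    by rewrite size_cat sA sB in H2; lia.
  set v := nth [::] B (j - size A).
  have HB : v \in B.
    apply: mem_nth; rewrite size_cat sA sB in H2; suff: j - size A < size B by []; lia.
  have [_ R1 C1] := sound HB.
  have Cv : covers p.+3 (mem (p.+3 :: v)).
    move=> i Hi; rewrite !inE.
    have [Hi2|Hi2] := ltnP i p.+2.
    + by move: (C1 i ltac:(lia)); rewrite /= => /orP[] ->; rewrite !orbT.
    + have -> : i = p.+2 by lia.
      by rewrite eqxx ?orbT.
  have [u Hu Au] := @complete p.+3 (mem (p.+3 :: v)) ltac:(lia) Cv.
  exists (index u A); first by rewrite index_mem.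
  rewrite nth_cat sA index_mem Hu (nth_map [::]) ?index_mem // nth_index //.
  move=> z; rewrite !inE => /orP[->//|Hz].
  by move/allP: Au => /(_ z Hz); rewrite !inE => /orP[->|->]; rewrite ?orbT.
Qed.
Import GRing.Theory.
Local Open Scope ring_scope.

Section Ideals.
Variable R : comNzRingType.

Lemma ig0 (gs : seq R) : ideal_gen gs 0.
Proof. by exists (fun _ => 0); rewrite big1 // => i _; rewrite mul0r. Qed.

Lemma igD (gs : seq R) a b : ideal_gen gs a -> ideal_gen gs b -> ideal_gen gs (a + b).
Proof.
move=> [c1 ->] [c2 ->]; exists (fun i => c1 i + c2 i).
by rewrite -big_split; apply: eq_bigr => i _; rewrite mulrDl.
Qed.

Lemma igM (gs : seq R) r a : ideal_gen gs a -> ideal_gen gs (r * a).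
Proof.
move=> [c ->]; exists (fun i => r * c i).
by rewrite mulr_sumr; apply: eq_bigr => i _; rewrite mulrA.
Qed.

Lemma igmem (gs : seq R) g : g \in gs -> ideal_gen gs g.
Proof.
move=> hg; have hi : (index g gs < size gs)%N by rewrite index_mem.
exists (fun i : 'I_(size gs) => if val i == index g gs then 1 else 0).
rewrite (bigD1 (Ordinal hi)) //= eqxx mul1r nth_index // big1 ?addr0 //.
by move=> i; rewrite -val_eqE /= => /negbTE ->; rewrite mul0r.
Qed.

Lemma rdvdP (x p : R) : rdvd x p <-> ideal_gen [:: x] p.
Proof.
split=> [[q ->]|[c ->]]; first by exists (fun _ => q); rewrite big_ord1 /= mulrC.
by exists (c ord0); rewrite big_ord1 /= mulrC.
Qed.

End Ideals.

Section Mono.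
Variables (K : fieldType) (n : nat).
Local Notation R := {mpoly K[n]}.
Local Notation X := (@mpolyX n K).

Definition mcrit (G : seq 'X_{1..n}) (f : R) :=
  forall t, f@_t != 0 -> has (fun g => (g <= t)%MM) G.

Lemma critP G f : ideal_gen (map X G) f <-> mcrit G f.
Proof.
split.
- move=> [c ->]; apply: big_ind.
  + by move=> t; rewrite mcoeff0 eqxx.
  + move=> a b Ha Hb t; rewrite mcoeffD => H.
    case: (eqVneq a@_t 0) => Ha0; last exact: Ha.
    by apply: Hb; rewrite Ha0 add0r in H.
  + move=> i _ t; have hi : (i < size G)%N by rewrite -(size_map X) ltn_ord.
    rewrite (nth_map 0%MM) // -mcoeff_msupp (perm_mem (msuppMX _ _)) => /mapP [m' _ ->].
    by apply/hasP; exists (nth 0%MM G i); rewrite ?mem_nth ?lem_addr.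
- move=> H; rewrite (mpolyE f) big_seq; apply: big_ind.
  + exact: ig0.
  + exact: igD.
  + move=> t ht; have := H t; rewrite -mcoeff_msupp ht => /(_ isT) /hasP [g Hg le].
    have -> : f@_t *: X t = (f@_t *: X (t - g)%MM) * X g.
      by rewrite -scalerAl -mpolyXD submK.
    by apply: igM; apply: igmem; apply: map_f.
Qed.

Lemma colonP G (q : 'X_{1..n}) f :
  ideal_colon (ideal_gen (map X G)) (ideal_gen [:: X q]) f <->
  (forall t, f@_t != 0 -> has (fun g => (g <= q + t)%MM) G).
Proof.
split.
- move=> H t ft.
  have : ideal_gen (map X G) (f * X q) by apply: H; apply: igmem; rewrite inE.
  by move/critP => /(_ (q + t)%MM); rewrite mcoeffMX => /(_ ft).
- move=> H g [c ->]; rewrite big_ord1 /= mulrCA; apply: igM; apply/critP => s.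
  rewrite -mcoeff_msupp (perm_mem (msuppMX f q)) => /mapP [t ht ->].
  by apply: H; rewrite -mcoeff_msupp.
Qed.

Definition mfilter (P : pred 'X_{1..n}) (f : R) : R :=
  \sum_(t <- msupp f) (if P t then f@_t else 0) *: X t.

Lemma mfilterE P f s : (mfilter P f)@_s = if P s then f@_s else 0.
Proof.
rewrite /mfilter raddf_sum /=.
under eq_bigr => t _ do rewrite mcoeffZ mcoeffX.
case: (boolP (s \in msupp f)) => hs.
- rewrite (bigD1_seq s) ?msupp_uniq //= eqxx mulr1 big1 ?addr0 //.
  by move=> t /negbTE ->; rewrite mulr0.
- rewrite big1_seq; last first.
    move=> t ht; have /negbTE -> : t != s by apply: contraNneq hs => <-.
    by rewrite mulr0.
  by move: hs; rewrite mcoeff_msupp negbK => /eqP ->; case: (P s).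
Qed.


Lemma has1 (u t : 'X_{1..n}) : has (fun g => (g <= t)%MM) [:: u] = (u <= t)%MM.
Proof. by rewrite /= orbF. Qed.

Lemma mem_takeP (M : seq 'X_{1..n}) i g : (i <= size M)%N ->
  g \in take i M -> exists2 j, (j < i)%N & g = nth 0%MM M j.
Proof.
move=> hi /(nthP 0%MM) [j]; rewrite size_takel // => hj <-.
by exists j; rewrite ?nth_take.
Qed.

Lemma mem_take_nth (M : seq 'X_{1..n}) i j : (i <= size M)%N -> (j < i)%N ->
  nth 0%MM M j \in take i M.
Proof. by move=> hi hj; rewrite -(nth_take 0%MM hj) mem_nth // size_takel. Qed.

Theorem absthm (M : seq 'X_{1..n}) (y : 'I_n) k :
  (k < size M)%N ->
  (forall j, (j < k)%N -> (U_(y)%MM <= nth 0%MM M j)%MM) ->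
  (forall j, (k <= j < size M)%N -> ~~ (U_(y)%MM <= nth 0%MM M j)%MM) ->
  (forall j, (k <= j < size M)%N ->
     exists2 l, (l < k)%N & (nth 0%MM M l <= U_(y)%MM + nth 0%MM M j)%MM) ->
  let U := map X M in
  let x := X U_(y)%MM in
  ideal_eq (ideal_colon (ideal_gen (take k U)) (ideal_gen [:: nth 0 U k]))
           (ideal_gen [:: x])
  /\
  (forall i, (k < i)%N -> (i < size U)%N ->
     ideal_eq (ideal_colon (ideal_gen (take i U)) (ideal_gen [:: nth 0 U i]))
              (ideal_sum (ideal_gen [:: x])
                 (ideal_colon (ideal_gen (drop k (take i U)))
                              (ideal_gen [:: nth 0 U i])))).
Proof.
move=> hk H1 H2 H3 U x.
have nthU j : (j < size M)%N -> nth 0 U j = X (nth 0%MM M j).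
  by move=> hj; rewrite (nth_map 0%MM).
have xE : [:: x] = map X [:: U_(y)%MM] by [].
have ydiv (q t : 'X_{1..n}) : ~~ (U_(y)%MM <= q)%MM -> (U_(y)%MM <= q + t)%MM -> (U_(y)%MM <= t)%MM.
  rewrite !lep1mP mnmDE negbK => /eqP ->; by rewrite add0n.
have trans3 (g q t : 'X_{1..n}) : (g <= U_(y)%MM + q)%MM -> (U_(y)%MM <= t)%MM -> (g <= q + t)%MM.
  move=> /mnm_lepP h1 /mnm_lepP h2; apply/mnm_lepP => i.
  have := h1 i; have := h2 i; rewrite !mnmDE; lia.
have trans1 (g m t : 'X_{1..n}) : (U_(y)%MM <= g)%MM -> (g <= m + t)%MM -> (U_(y)%MM <= m + t)%MM.
  by move=> a b; apply: lepm_trans b.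
split.
- move=> f; rewrite nthU // -map_take colonP xE critP.
  split=> H t /H.
  + move=> /hasP [g hg hle].
    have [j hj gE] := mem_takeP (ltnW hk) hg; subst g.
    rewrite has1; apply: (ydiv (nth 0%MM M k)); first by apply: H2; lia.
    exact: trans1 (H1 j hj) hle.
  + rewrite has1 => yt.
    have [l hl hle] := H3 k ltac:(lia).
    apply/hasP; exists (nth 0%MM M l); first by apply: mem_take_nth; lia.
    exact: trans3.
- move=> i hki; rewrite size_map => hi f.
  rewrite nthU // -map_take -map_drop colonP xE.
  split.
  + move=> H.
    exists (mfilter (fun t => (U_(y)%MM <= t)%MM) f), (f - mfilter (fun t => (U_(y)%MM <= t)%MM) f).
    split; [|split]; last by rewrite addrC subrK.
    * apply/critP => t; rewrite mfilterE has1; by case: ifP => //; rewrite eqxx.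
    * apply/colonP => t; rewrite mcoeffB mfilterE.
      case: ifP => [_|yt]; first by rewrite subrr eqxx.
      rewrite subr0 => /H /hasP [g hg hle].
      have [j hj gE] := mem_takeP (ltnW hi) hg; subst g.
      have [hjk|hjk] := ltnP j k.
        have := ydiv _ _ (H2 i ltac:(lia)) (trans1 _ _ _ (H1 j hjk) hle).
        by rewrite yt.
      apply/hasP; exists (nth 0%MM M j) => //.
      apply/(nthP 0%MM); exists (j - k)%N.
        rewrite size_drop size_takel; [|exact: ltnW hi]. suff : (j - k < i - k)%N by []. lia.
      by rewrite nth_drop nth_take; [congr nth|]; lia.
    + move=> [a [b [/critP Ha [/colonP Hb ->]]]] t.
      rewrite mcoeffD; case: (eqVneq a@_t 0) => [a0|an0] hab; last first.
        have := Ha t an0; rewrite has1 => yt.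
        have [l hl hle] := H3 i ltac:(lia).
        apply/hasP; exists (nth 0%MM M l); first by apply: mem_take_nth; lia.
        exact: trans3.
      move: hab; rewrite a0 add0r => /Hb /hasP [g hg hle]; apply/hasP; exists g => //.
      exact: mem_drop hg.
Qed.

End Mono.

Section Final.
Variables (K : fieldType) (n : nat).
Local Notation X := (@mpolyX n K).

Definition emon (j : nat) : 'X_{1..n} :=
  if (insub j.-1 : option 'I_n) is Some i then U_(i)%MM else 0%MM.

Definition mon (s : seq nat) : 'X_{1..n} := (\big[+%MM/0%MM]_(j <- s) emon j)%MM.

Lemma varE j : (j.-1 < n)%N -> var K n j = X (emon j).
Proof. by move=> hj; rewrite /var /emon insubT. Qed.

Lemma emonE j (i : 'I_n) : (j.-1 < n)%N -> emon j i = (j.-1 == val i).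
Proof. by move=> hj; rewrite /emon insubT mnm1E -val_eqE /=. Qed.

Definition inr (s : seq nat) := all (fun j => (0 < j <= n)%N) s.

Lemma monoE s : inr s -> mono K n s = X (mon s).
Proof.
move=> /allP hs; rewrite /mono (eq_big_seq (fun j => X (emon j))) ?mprodXE //.
by move=> j /hs hj; apply: varE; lia.
Qed.

Lemma sum_count (s : seq nat) (b : pred nat) : (\sum_(j <- s) (b j : nat))%N = count b s.
Proof. by elim: s => [|a s IH]; rewrite ?big_nil ?big_cons ?IH. Qed.

Lemma monE s (i : 'I_n) : inr s -> mon s i = count (fun j => j.-1 == val i) s.
Proof.
move=> /allP hs; rewrite /mon mnm_sumE -sum_count big_seq [RHS]big_seq.
by apply: eq_bigr => j /hs hj; rewrite emonE //; lia.
Qed.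

Lemma mon_le s t : uniq s -> {subset s <= t} -> inr s -> inr t -> (mon s <= mon t)%MM.
Proof.
move=> us st rs rt; apply/mnm_lepP => i; rewrite !monE // -!size_filter.
apply: uniq_leq_size; first exact: filter_uniq.
by move=> z; rewrite !mem_filter => /andP[-> /st].
Qed.

Lemma mon_cons j t : mon (j :: t) = (emon j + mon t)%MM.
Proof. by rewrite /mon big_cons. Qed.

Variable (hn : (2 <= n)%N).
Definition y : 'I_n := Ordinal (ltac:(lia) : (n.-2 < n)%N).

Lemma emony : emon n.-1 = U_(y)%MM.
Proof. rewrite /emon insubT; [lia|] => h. by congr (mnm1 _); apply: val_inj. Qed.

Lemma ymon s : inr s -> (U_(y)%MM <= mon s)%MM = (n.-1 \in s).
Proof.
move=> rs; rewrite lep1mP monE // -lt0n -has_count.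
move/allP: rs => rs.
apply/hasP/idP => [[j hj /eqP e]|h]; last by exists n.-1 => //=; apply/eqP; lia.
have := rs j hj; rewrite /= in e => hj'; have -> : n.-1 = j by lia.
done.
Qed.

Lemma rdvdX (m : 'X_{1..n}) : rdvd (X U_(y)%MM) (X m) <-> (U_(y)%MM <= m)%MM.
Proof.
split.
- move/rdvdP; rewrite (_ : [:: X U_(y)%MM] = map X [:: U_(y)%MM]) // => /critP /(_ m).
  by rewrite mcoeffX eqxx oner_neq0 /= orbF => /(_ isT).
- move=> h; exists (X (m - U_(y)%MM)%MM); by rewrite -mpolyXD addmC submK.
Qed.

End Final.

Theorem lemma3p6 (K : fieldType) (n : nat) (hn : (2 <= n)%N) (k : nat) :
  let U := rootedR K n in
  let x := var K n n.-1 in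
  (k < size U)%N ->
  ~ rdvd x (nth 0 U k) ->
  (forall j, (j < k)%N -> rdvd x (nth 0 U j)) ->
  ideal_eq (ideal_colon (ideal_gen (take k U)) (ideal_gen [:: nth 0 U k]))
           (ideal_gen [:: x])
  /\
  (forall i, (k < i)%N -> (i < size U)%N ->
     ideal_eq (ideal_colon (ideal_gen (take i U)) (ideal_gen [:: nth 0 U i]))
              (ideal_sum (ideal_gen [:: x])
                 (ideal_colon (ideal_gen (drop k (take i U)))
                              (ideal_gen [:: nth 0 U i])))).
Proof.
move=> U x hk hnd hd.
have [S1 [S2 S3]] := structR hn.
set S := rooted n.
have gS s : s \in S -> [/\ uniq s, inr n s & covers n (mem s)].
  move=> /sound [u r c]; split=> //; exact/allP.
set M := map (mon n) S.
have UE : U = map (@mpolyX n K) M.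
  rewrite /U /rootedR /M -map_comp; apply/eq_in_map => s /gS [_ r _].
  by rewrite /= monoE.
have xE : x = 'X_[U_(y hn)%MM].
  by rewrite /x varE ?emony //; lia.
have sM : size M = size S by rewrite size_map.
have sU : size U = size S by rewrite UE size_map.
have nthM j : (j < size S)%N -> nth 0%MM M j = mon n (nth [::] S j).
  by move=> hj; rewrite (nth_map [::]).
have nthU j : (j < size S)%N -> nth 0 U j = 'X_[nth 0%MM M j].
  by move=> hj; rewrite UE (nth_map 0%MM) // sM.
have gSj j : (j < size S)%N -> [/\ uniq (nth [::] S j), inr n (nth [::] S j) & covers n (mem (nth [::] S j))].
  by move=> hj; apply: gS; apply: mem_nth.
rewrite sU in hk.
have kE : k = k0 n.
  case: (ltngtP k (k0 n)) => // hkk.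
  - exfalso; apply: hnd; rewrite xE nthU // rdvdX nthM // ymon; last by case: (gSj k hk).
    exact: S1.
  - have h0 : (k0 n < size S)%N by lia.
    have := hd _ hkk; rewrite xE nthU // rdvdX nthM // ymon; last by case: (gSj _ h0).
    by move=> h; have := S2 (k0 n); rewrite leqnn h0 h => /(_ isT).
subst k.
rewrite xE UE.
apply: absthm; rewrite ?sM //.
- move=> j hj; rewrite nthM ?ymon; [exact: S1 | by case: (gSj j ltac:(lia)) | lia].
- move=> j hj; rewrite nthM ?ymon; [exact: S2 | by case: (gSj j ltac:(lia)) | lia].
- move=> j hj; have [l hl sub] := S3 j hj; exists l => //.
  have [u1 r1 _] := gSj l ltac:(lia).
  have [_ r2 _] := gSj j ltac:(lia).
  rewrite !nthM; try lia.
  rewrite -(emony hn) -mon_cons; apply: mon_le => //=.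
  rewrite r2 andbT; lia.
Qed.
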